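(* Let $A=\prod_{i=1}^M\mathbb{Z}_{N_i}$ with each $N_i$ a prime power, let $\{t_i\}$ be numbers with $t_i\in\frac12\mathbb{Z}$ if $N_i$ is even and $t_i\in\mathbb{Z}$ if $N_i$ is odd, and let $\{p_{ij}\}_{i\neq j}$ be integers with $p_{ij}=p_{ji}$; set $p_{ii}=\lfloor t_i\rfloor$, $N_{ij}=\gcd(N_i,N_j)$, and $n_i=0$ if $t_i\in\mathbb{Z}$, $n_i=N_i/2$ if $t_i\in\frac12+\mathbb{Z}$. Consider the Abelian anyon theory $\mathcal{T}$ whose fusion group is the abelian group freely generated by elements $c_i,\varphi_i$ ($i=1,\dots,M$) subject only to $c_i^{N_i}=\varphi_i^{N_i}=1$, with exchange statistics determined (via $\theta(xy)=\theta(x)\theta(y)B_\theta(x,y)$, $B_\theta$ bimultiplicative and symmetric) by $\theta(c_i)=1$, $\theta(\varphi_i)=e^{2\pi i n_i/N_i^2}$, $B_\theta(c_i,c_j)=1$, $B_\theta(\varphi_i,c_j)=e^{2\pi i\delta_{ij}/N_i}$, $B_\theta(\varphi_i,\varphi_j)=1$ for $i\ne j$ (a stack of $M$ decoupled twisted quantum doubles). Define $a_i=\varphi_i\prod_{j=1}^{i}c_j^{p_{ji}N_j/N_{ij}}$. Then each $a_i$ has order $N_i$, the $a_i$ generate a subgroup isomorphic to $A$, and $$\theta(a_i)=e^{2\pi i t_i/N_i},\qquad B_\theta(a_i,a_j)=e^{2\pi i p_{ij}/N_{ij}}\ (i\neq j).$$ Hence the subtheory generated by $\{a_i\}$ is the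 Abelian anyon theory with fusion group $A$, generator statistics $t_i$ and mutual braidings $p_{ij}$; every Abelian anyon theory arises this way.
   Context: An Abelian anyon theory is a pair $(A,\theta)$ with $A$ a finite abelian group (anyon types under fusion) and $\theta:A\to U(1)$ the exchange statistics; the braiding phase is $B_\theta(a,b)=\theta(ab)/(\theta(a)\theta(b))$, required to be symmetric and bimultiplicative. Every Abelian anyon theory can be parameterized by a decomposition $A=\prod_i\mathbb{Z}_{N_i}$ into prime-power cyclic factors with generators $a_i$, $\theta(a_i)=e^{2\pi i t_i/N_i}$ ($t_i$ as stated) and $B_\theta(a_i,a_j)=e^{2\pi i p_{ij}/N_{ij}}$ for $i\ne j$. $\lfloor t\rfloor$ is the floor function. *)

(* Defs.v *)
From Stdlib Require Import ZArith Znumtheory Reals.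
From Coquelicot Require Import Coquelicot.

Open Scope Z_scope.

Definition expi (q : R) : C := (cos (2 * PI * q), sin (2 * PI * q))%R.

Definition prime_power (n : Z) : Prop :=
  exists p k, prime p /\ 1 <= k /\ n = p ^ k.

(* Elements of the free abelian group on c_i, phi_i (i in nat; only
   i < M will be relevant): a pair (u, v) of exponent vectors,
   representing prod_i c_i^{u i} phi_i^{v i}. *)
Definition elt := ((nat -> Z) * (nat -> Z))%type.

Definition gzero : elt := (fun _ => 0, fun _ => 0).
Definition gadd (x y : elt) : elt :=
  (fun i => fst x i + fst y i, fun i => snd x i + snd y i).
Definition gscale (k : Z) (x : elt) : elt :=
  (fun i => k * fst x i, fun i => k * snd x i).
Fixpoint gsum (n : nat) (f : nat -> elt) : elt :=
  match n with
  | O => gzero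
  | S n' => gadd (gsum n' f) (f n')
  end.

Definition delta (i : nat) : nat -> Z := fun j => if Nat.eqb j i then 1 else 0.
Definition gen_c (i : nat) : elt := (delta i, fun _ => 0).
Definition gen_phi (i : nat) : elt := (fun _ => 0, delta i).

(* Equality in the fusion group: the abelian group generated by c_i, phi_i
   (i < M) subject only to c_i^{N_i} = phi_i^{N_i} = 1, i.e. equality of
   exponents modulo N_i for i < M. *)
Definition geq (M : nat) (N : nat -> Z) (x y : elt) : Prop :=
  forall i, (i < M)%nat ->
    (N i | fst x i - fst y i) /\ (N i | snd x i - snd y i).

Definition braid (theta : elt -> C) (x y : elt) : C :=
  Cdiv (theta (gadd x y)) (Cmult (theta x) (theta y)).

(* t_i is encoded by the integer T_i = 2 t_i. *)
Definition n_of (N T : Z) : Z := if Z.even T then 0 else N / 2.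

Definition pfull (T : nat -> Z) (p : nat -> nat -> Z) (i j : nat) : Z :=
  if Nat.eqb i j then T i / 2 else p i j.

(* a_i = phi_i * prod_{j <= i} c_j^{p_{ji} N_j / N_{ij}}  (0-indexed) *)
Definition gen_a (N T : nat -> Z) (p : nat -> nat -> Z) (i : nat) : elt :=
  gadd (gen_phi i)
    (gsum (S i) (fun j =>
       gscale (pfull T p j i * N j / Z.gcd (N i) (N j)) (gen_c j))).

(* Main.v *)
Require Import Defs.
From Stdlib Require Import ZArith Znumtheory Reals.
From Coquelicot Require Import Coquelicot.
From Stdlib Require Import Lra Lia FunctionalExtensionality.

Open Scope Z_scope.

Lemma expi_add (a b : R) : Cmult (expi a) (expi b) = expi (a + b).
Proof.
  unfold expi, Cmult; simpl.
  replace (2 * PI * (a + b))%R with (2*PI*a + 2*PI*b)%R by ring.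
  rewrite cos_plus, sin_plus. f_equal; ring.
Qed.

Lemma expi_0 : expi 0 = RtoC 1.
Proof. unfold expi, RtoC. rewrite Rmult_0_r, cos_0, sin_0. reflexivity. Qed.

Lemma expi_neq0 (a : R) : expi a <> RtoC 0.
Proof.
  intro H. unfold expi, RtoC in H. injection H as H1 H2.
  apply (cos_sin_0 (2*PI*a)); auto.
Qed.

Lemma theta_neq0 (theta : elt -> C) (Hunit : forall x, Cmod (theta x) = 1%R) x :
  theta x <> RtoC 0.
Proof. intro H. specialize (Hunit x). rewrite H, Cmod_0 in Hunit. lra. Qed.

Lemma theta_add theta (Hunit : forall x, Cmod (theta x) = 1%R) x y :
  theta (gadd x y) = Cmult (Cmult (theta x) (theta y)) (braid theta x y).
Proof.
  unfold braid. pose proof (theta_neq0 theta Hunit x). pose proof (theta_neq0 theta Hunit y).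
  field. auto.
Qed.

Lemma braid_neq0 theta (Hunit : forall x, Cmod (theta x) = 1%R) x y :
  braid theta x y <> RtoC 0.
Proof.
  intro H. pose proof (theta_add theta Hunit x y) as E. rewrite H in E.
  apply (theta_neq0 theta Hunit (gadd x y)). rewrite E. unfold Cmult, RtoC; simpl.
  f_equal; ring.
Qed.

Lemma gadd00 : gadd gzero gzero = gzero.
Proof. unfold gadd, gzero. simpl. f_equal; apply functional_extensionality; intros; ring. Qed.

Lemma braid_0 theta (Hunit : forall x, Cmod (theta x) = 1%R)
  (Hbim : forall x y z, braid theta (gadd x y) z = Cmult (braid theta x z) (braid theta y z)) z :
  braid theta gzero z = RtoC 1.
Proof.
  pose proof (Hbim gzero gzero z) as E. rewrite gadd00 in E.
  pose proof (braid_neq0 theta Hunit gzero z).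
  set (b := braid theta gzero z) in *.
  transitivity (Cmult (Cmult b b) (Cinv b)); [field; auto|].
  rewrite <- E. field; auto.
Qed.

Lemma gscale_succ k x : gscale (k + 1) x = gadd (gscale k x) x.
Proof. unfold gscale, gadd; simpl. f_equal; apply functional_extensionality; intros; ring. Qed.

Lemma gscale_zero x : gscale 0 x = gzero.
Proof. unfold gscale, gzero; simpl. f_equal; apply functional_extensionality; intros; ring. Qed.

Lemma gscale_opp k x : gadd (gscale k x) (gscale (-k) x) = gzero.
Proof. unfold gscale, gadd, gzero; simpl. f_equal; apply functional_extensionality; intros; ring. Qed.

Lemma braid_scale theta (Hunit : forall x, Cmod (theta x) = 1%R)
  (Hbim : forall x y z, braid theta (gadd x y) z = Cmult (braid theta x z) (braid theta y z))
  x z r : braid theta x z = expi r ->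
  forall k, braid theta (gscale k x) z = expi (IZR k * r).
Proof.
  intros Hr.
  assert (Hnn : forall k, 0 <= k -> braid theta (gscale k x) z = expi (IZR k * r)).
  { apply natlike_ind.
    - rewrite gscale_zero, braid_0 by auto. rewrite Rmult_0_l, expi_0. reflexivity.
    - intros k Hk IH. rewrite <- Z.add_1_r, gscale_succ, Hbim, IH, Hr, expi_add.
      f_equal. rewrite plus_IZR. simpl. ring. }
  intros k. destruct (Z_le_gt_dec 0 k) as [H|H]; [auto|].
  pose proof (Hbim (gscale k x) (gscale (-k) x) z) as E.
  rewrite gscale_opp, braid_0, (Hnn (-k)) in E by (auto; lia).
  pose proof (expi_neq0 (IZR (-k) * r)).
  pose proof (expi_add (IZR k * r) (IZR (-k) * r)) as E2.
  rewrite opp_IZR in E2. replace (IZR k * r + - IZR k * r)%R with 0%R in E2 by ring.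
  rewrite expi_0 in E2. rewrite opp_IZR in E, H0.
  set (u := expi (- IZR k * r)) in *.
  assert (Cmult (Cmult (braid theta (gscale k x) z) u) (Cinv u) =
          Cmult (Cmult (expi (IZR k * r)) u) (Cinv u)) by (rewrite <- E, E2; reflexivity).
  replace (braid theta (gscale k x) z) with (Cmult (Cmult (braid theta (gscale k x) z) u) (Cinv u)) by (field; auto).
  rewrite H1. field; auto.
Qed.

Fixpoint ssum (n : nat) (e : nat -> Z) : elt :=
  match n with O => gzero | S n' => gadd (ssum n' e) (gscale (e n') (gen_c n')) end.

Lemma ssum_eq n e : gsum n (fun j => gscale (e j) (gen_c j)) = ssum n e.
Proof. induction n; simpl; [reflexivity| now rewrite IHn]. Qed.

Lemma gen_a_eq N T p i : gen_a N T p i =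
  gadd (gen_phi i) (ssum (S i) (fun j => pfull T p j i * N j / Z.gcd (N i) (N j))).
Proof. unfold gen_a. now rewrite ssum_eq. Qed.

Fixpoint rsum (n : nat) (f : nat -> R) : R :=
  match n with O => 0%R | S n' => (rsum n' f + f n')%R end.

Lemma rsum_0 n f : (forall j, (j < n)%nat -> f j = 0%R) -> rsum n f = 0%R.
Proof. induction n; intros H; simpl; [reflexivity|]. rewrite IHn by (intros; apply H; lia). rewrite H by lia. ring. Qed.

Lemma rsum_delta n f i : (forall j, (j < n)%nat -> j <> i -> f j = 0%R) ->
  rsum n f = if Nat.ltb i n then f i else 0%R.
Proof.
  induction n; intros H; cbn [rsum]; [reflexivity|].
  rewrite IHn by (intros; apply H; lia).
  destruct (Nat.ltb_spec i n); destruct (Nat.ltb_spec i (S n)); try lia.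
  - rewrite (H n) by lia. ring.
  - assert (i = n) by lia. subst. ring.
  - rewrite (H n) by lia. ring.
Qed.

Lemma braid_ssum theta (Hunit : forall x, Cmod (theta x) = 1%R)
  (Hbim : forall x y z, braid theta (gadd x y) z = Cmult (braid theta x z) (braid theta y z))
  n e z r : (forall j, (j < n)%nat -> braid theta (gen_c j) z = expi (r j)) ->
  braid theta (ssum n e) z = expi (rsum n (fun j => IZR (e j) * r j)%R).
Proof.
  induction n; intros H; simpl.
  - rewrite braid_0, <- expi_0 by auto. reflexivity.
  - rewrite Hbim, IHn by (intros; apply H; lia).
    rewrite (braid_scale theta Hunit Hbim _ _ (r n)) by (apply H; lia).
    apply expi_add.
Qed.

Lemma theta0 theta (Hunit : forall x, Cmod (theta x) = 1%R)
  (Hbim : forall x y z, braid theta (gadd x y) z = Cmult (braid theta x z) (braid theta y z)) :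
  theta gzero = RtoC 1.
Proof.
  pose proof (theta_add theta Hunit gzero gzero) as E.
  rewrite gadd00, braid_0 in E by auto.
  pose proof (theta_neq0 theta Hunit gzero).
  set (t := theta gzero) in *.
  transitivity (Cmult (Cmult (Cmult t t) (RtoC 1)) (Cinv t)); [field; auto|].
  rewrite <- E. field; auto.
Qed.

Lemma theta_scale theta (Hunit : forall x, Cmod (theta x) = 1%R)
  (Hsym : forall x y, braid theta x y = braid theta y x)
  (Hbim : forall x y z, braid theta (gadd x y) z = Cmult (braid theta x z) (braid theta y z))
  x : theta x = RtoC 1 -> braid theta x x = expi 0 ->
  forall k, theta (gscale k x) = RtoC 1.
Proof.
  intros Hx Hxx.
  assert (Hb : forall k l, braid theta (gscale k x) (gscale l x) = RtoC 1).
  { intros k l. rewrite (braid_scale theta Hunit Hbim x _ 0%R).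
    - rewrite Rmult_0_r. apply expi_0.
    - rewrite Hsym, (braid_scale theta Hunit Hbim x _ 0%R) by auto.
      now rewrite Rmult_0_r. }
  assert (Hnn : forall k, 0 <= k -> theta (gscale k x) = RtoC 1).
  { apply natlike_ind.
    - rewrite gscale_zero. apply theta0; auto.
    - intros k Hk IH. rewrite <- Z.add_1_r, gscale_succ, theta_add, IH, Hx by auto.
      rewrite (braid_scale theta Hunit Hbim x x 0%R Hxx), Rmult_0_r, expi_0.
      unfold Cmult, RtoC; simpl. f_equal; ring. }
  intros k. destruct (Z_le_gt_dec 0 k) as [H|H]; [auto|].
  pose proof (theta_add theta Hunit (gscale k x) (gscale (-k) x)) as E.
  rewrite gscale_opp, theta0, Hb, (Hnn (-k)) in E by (auto; lia).
  rewrite E. unfold Cmult, RtoC; simpl. destruct (theta (gscale k x)); simpl. f_equal; ring.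
Qed.

Lemma theta_ssum theta (Hunit : forall x, Cmod (theta x) = 1%R)
  (Hsym : forall x y, braid theta x y = braid theta y x)
  (Hbim : forall x y z, braid theta (gadd x y) z = Cmult (braid theta x z) (braid theta y z))
  M (Hc : forall i, (i < M)%nat -> theta (gen_c i) = 1%R)
  (Hcc : forall i j, (i < M)%nat -> (j < M)%nat -> braid theta (gen_c i) (gen_c j) = 1%R)
  n e : (n <= M)%nat -> theta (ssum n e) = RtoC 1.
Proof.
  induction n; intros Hn; simpl.
  - apply theta0; auto.
  - rewrite theta_add, IHn by (auto; lia).
    rewrite (theta_scale theta Hunit Hsym Hbim); [| apply Hc; lia | rewrite expi_0; apply Hcc; lia].
    rewrite (braid_ssum theta Hunit Hbim n e _ (fun _ => 0%R)).
    + rewrite rsum_0 by (intros; ring). rewrite expi_0. unfold Cmult, RtoC; simpl; f_equal; ring.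
    + intros j Hj. rewrite Hsym, (braid_scale theta Hunit Hbim _ _ 0%R).
      * now rewrite Rmult_0_r.
      * rewrite expi_0. apply Hcc; lia.
Qed.

Lemma ssum_fst n e l : fst (ssum n e) l = if Nat.ltb l n then e l else 0.
Proof.
  induction n; cbn [ssum]; [reflexivity|]. unfold gadd, gscale, gen_c, delta; cbn [fst snd].
  rewrite IHn. destruct (Nat.ltb_spec l n); destruct (Nat.ltb_spec l (S n));
  destruct (Nat.eqb_spec l n); try lia; subst; ring.
Qed.

Lemma ssum_snd n e l : snd (ssum n e) l = 0.
Proof. induction n; cbn [ssum]; [reflexivity|]. simpl. rewrite IHn. ring. Qed.

Lemma a_fst N T p i l : fst (gen_a N T p i) l =
  if Nat.ltb l (S i) then pfull T p l i * N l / Z.gcd (N i) (N l) else 0.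
Proof. rewrite gen_a_eq. unfold gadd at 1, gen_phi. cbn [fst]. rewrite ssum_fst. apply Z.add_0_l. Qed.

Lemma a_snd N T p i l : snd (gen_a N T p i) l = delta i l.
Proof. rewrite gen_a_eq. unfold gadd at 1, gen_phi. cbn [snd]. rewrite ssum_snd. ring. Qed.

Lemma pp_pos n : prime_power n -> 0 < n.
Proof.
  intros (q & k & Hq & Hk & ->). apply Z.pow_pos_nonneg; [|lia].
  pose proof (prime_ge_2 q Hq). lia.
Qed.

Lemma div_key Ni Nl k x : 0 < Ni -> 0 < Nl -> (Ni | k) ->
  (Nl | k * (x * Nl / Z.gcd Ni Nl)).
Proof.
  intros Hi Hl [q Hq].
  set (g := Z.gcd Ni Nl).
  assert (Hg : g <> 0) by (intro E; apply Z.gcd_eq_0 in E; lia).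
  destruct (Z.gcd_divide_l Ni Nl) as [A HA].
  destruct (Z.gcd_divide_r Ni Nl) as [B HB]. fold g in HA, HB.
  assert (E : x * Nl / g = x * B) by (rewrite HB at 1; rewrite Z.mul_assoc, Z.div_mul by auto; reflexivity).
  rewrite E. exists (q * A * x). rewrite Hq, HA, HB. ring.
Qed.

Lemma gsum_fst_div d l n (f : nat -> elt) :
  (forall j, (j < n)%nat -> (d | fst (f j) l)) -> (d | fst (gsum n f) l).
Proof.
  induction n; intros H; simpl.
  - apply Z.divide_0_r.
  - apply Z.divide_add_r; [apply IHn; intros; apply H; lia | apply H; lia].
Qed.

Lemma gsum_snd_a N T p m n l : snd (gsum n (fun i => gscale (m i) (gen_a N T p i))) l =
  if Nat.ltb l n then m l else 0.
Proof.
  induction n; [reflexivity|]. cbn [gsum]. unfold gadd at 1, gscale at 1. cbn [snd]. rewrite IHn. unfold gscale; cbn [snd]. rewrite a_snd. unfold delta.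
  destruct (Nat.ltb_spec l n); destruct (Nat.ltb_spec l (S n));
  destruct (Nat.eqb_spec l n); try lia; subst; ring.
Qed.

Lemma braid_ssum_phi theta (Hunit : forall x, Cmod (theta x) = 1%R)
  (Hsym : forall x y, braid theta x y = braid theta y x)
  (Hbim : forall x y z, braid theta (gadd x y) z = Cmult (braid theta x z) (braid theta y z))
  M (N : nat -> Z)
  (Hphic : forall i j, (i < M)%nat -> (j < M)%nat ->
      braid theta (gen_phi i) (gen_c j) =
        expi (IZR (if Nat.eqb i j then 1 else 0) / IZR (N i)))
  n e i : (n <= M)%nat -> (i < M)%nat ->
  braid theta (ssum n e) (gen_phi i) =
    expi (if Nat.ltb i n then (IZR (e i) / IZR (N i))%R else 0%R).
Proof.
  intros Hn Hi.
  rewrite (braid_ssum theta Hunit Hbim n e _ (fun j => IZR (if Nat.eqb i j then 1 else 0) / IZR (N i))%R).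
  - rewrite (rsum_delta _ _ i).
    + rewrite Nat.eqb_refl. destruct (Nat.ltb i n); f_equal. unfold Rdiv. ring.
    + intros j Hj Hji. destruct (Nat.eqb_spec i j); [lia|]. unfold Rdiv. ring.
  - intros j Hj. rewrite Hsym. apply Hphic; lia.
Qed.

Lemma real_key x Ni g : 0 < Ni -> 0 < g -> (g | Ni) ->
  (IZR (x * Ni / g) / IZR Ni = IZR x / IZR g)%R.
Proof.
  intros Hi Hg [A HA].
  assert (E : x * Ni / g = x * A) by (rewrite HA, Z.mul_assoc, Z.div_mul by lia; reflexivity).
  rewrite E, HA, !mult_IZR. field. split; apply not_0_IZR; nia.
Qed.

Theorem mainTheorem9
  (M : nat) (N : nat -> Z) (T : nat -> Z) (p : nat -> nat -> Z)
  (HN : forall i, (i < M)%nat -> prime_power (N i))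
  (* t_i = T_i / 2 lies in (1/2)Z, and in Z when N_i is odd *)
  (HT : forall i, (i < M)%nat -> Z.Odd (N i) -> Z.Even (T i))
  (Hp : forall i j, (i < M)%nat -> (j < M)%nat -> i <> j -> p i j = p j i)
  (theta : elt -> C)
  (* theta is a function on the fusion group *)
  (Hwd : forall x y, geq M N x y -> theta x = theta y)
  (* theta takes values in U(1) *)
  (Hunit : forall x, Cmod (theta x) = 1%R)
  (* B_theta symmetric and bimultiplicative *)
  (Hsym : forall x y, braid theta x y = braid theta y x)
  (Hbim : forall x y z,
      braid theta (gadd x y) z = Cmult (braid theta x z) (braid theta y z))
  (* statistics of the generators *)
  (Hc : forall i, (i < M)%nat -> theta (gen_c i) = 1%R)
  (Hphi : forall i, (i < M)%nat ->
      theta (gen_phi i) = expi (IZR (n_of (N i) (T i)) / IZR (N i ^ 2)))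
  (Hcc : forall i j, (i < M)%nat -> (j < M)%nat ->
      braid theta (gen_c i) (gen_c j) = 1%R)
  (Hphic : forall i j, (i < M)%nat -> (j < M)%nat ->
      braid theta (gen_phi i) (gen_c j) =
        expi (IZR (if Nat.eqb i j then 1 else 0) / IZR (N i)))
  (Hphiphi : forall i j, (i < M)%nat -> (j < M)%nat -> i <> j ->
      braid theta (gen_phi i) (gen_phi j) = 1%R) :
  let a := gen_a N T p in
  (* each a_i has order N_i *)
  (forall i, (i < M)%nat -> forall k : Z,
      geq M N (gscale k (a i)) gzero <-> (N i | k)) /\
  (* m |-> prod_i a_i^{m_i} induces an isomorphism A = prod Z_{N_i} -> <a_i> *)
  (forall m : nat -> Z,
      geq M N (gsum M (fun i => gscale (m i) (a i))) gzero <->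
      (forall i, (i < M)%nat -> (N i | m i))) /\
  (* statistics *)
  (forall i, (i < M)%nat -> theta (a i) = expi (IZR (T i) / 2 / IZR (N i))) /\
  (forall i j, (i < M)%nat -> (j < M)%nat -> i <> j ->
      braid theta (a i) (a j) = expi (IZR (p i j) / IZR (Z.gcd (N i) (N j)))).
Proof.
  intros a. subst a.
  assert (Npos : forall i, (i < M)%nat -> 0 < N i) by (intros; apply pp_pos, HN; auto).
  assert (Hdiv : forall i l k, (i < M)%nat -> (l < M)%nat -> (N i | k) ->
            (N l | k * fst (gen_a N T p i) l)).
  { intros i l k Hi Hl Hk. rewrite a_fst. destruct (Nat.ltb l (S i)).
    - apply div_key; auto.
    - exists 0. ring. }
  split; [|split; [|split]].
  - intros i Hi k. split.
    + intros H. destruct (H i Hi) as [_ H2]. cbn [gscale snd gzero] in H2.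
      rewrite a_snd in H2. unfold delta in H2. rewrite Nat.eqb_refl in H2.
      now rewrite Z.sub_0_r, Z.mul_1_r in H2.
    + intros Hk l Hl. cbn [gscale fst snd gzero]. rewrite !Z.sub_0_r. split.
      * apply Hdiv; auto.
      * rewrite a_snd. unfold delta. destruct (Nat.eqb_spec l i).
        -- subst. now rewrite Z.mul_1_r.
        -- exists 0. ring.
  - intros m. split.
    + intros H i Hi. destruct (H i Hi) as [_ H2]. cbn [snd gzero] in H2.
      rewrite gsum_snd_a in H2. destruct (Nat.ltb_spec i M); [|lia].
      now rewrite Z.sub_0_r in H2.
    + intros H l Hl. cbn [fst snd gzero]. rewrite !Z.sub_0_r. split.
      * apply gsum_fst_div. intros j Hj. cbn [gscale fst]. apply Hdiv; auto.
      * rewrite gsum_snd_a. destruct (Nat.ltb l M); auto. exists 0; ring.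
  - intros i Hi. rewrite gen_a_eq, theta_add, Hphi by auto.
    rewrite (theta_ssum theta Hunit Hsym Hbim M Hc Hcc) by lia.
    rewrite Hsym, (braid_ssum_phi theta Hunit Hsym Hbim M N Hphic) by lia.
    destruct (Nat.ltb_spec i (S i)); [|lia].
    unfold pfull. rewrite Nat.eqb_refl, Z.gcd_diag, Z.abs_eq by (specialize (Npos i Hi); lia).
    rewrite Z.div_mul by (specialize (Npos i Hi); lia).
    replace (Cmult (Cmult (expi (IZR (n_of (N i) (T i)) / IZR (N i ^ 2))) (RtoC 1))
               (expi (IZR (T i / 2) / IZR (N i))))
      with (expi (IZR (n_of (N i) (T i)) / IZR (N i ^ 2) + IZR (T i / 2) / IZR (N i)))
      by (rewrite <- expi_add; unfold Cmult, RtoC; simpl; f_equal; ring).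
    f_equal. specialize (Npos i Hi). assert (HNr : IZR (N i) <> 0%R) by (apply not_0_IZR; lia).
    rewrite Z.pow_2_r, mult_IZR. unfold n_of.
    destruct (Z.Even_or_Odd (T i)) as [[q Hq]|[q Hq]].
    + assert (Z.even (T i) = true) by (apply Z.even_spec; exists q; auto).
      rewrite H0. replace (T i / 2) with q by (rewrite Hq; Z.div_mod_to_equations; lia).
      rewrite Hq, mult_IZR. simpl. field. auto.
    + assert (Z.even (T i) = false).
      { rewrite <- Z.negb_odd. apply Bool.negb_false_iff, Z.odd_spec. exists q; auto. }
      rewrite H0.
      destruct (Z.Even_or_Odd (N i)) as [[r Hr]|Hodd].
      2:{ destruct (HT i Hi Hodd) as [q' Hq']. lia. }
      replace (T i / 2) with q by (rewrite Hq; Z.div_mod_to_equations; lia).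
      replace (N i / 2) with r by (rewrite Hr; Z.div_mod_to_equations; lia).
      rewrite Hq, Hr in *. rewrite plus_IZR, !mult_IZR in *. simpl.
      field. intro E. apply HNr. rewrite E. ring.
  - intros i j Hi Hj Hij.
    assert (Hbim2 : forall x y z, braid theta x (gadd y z) = Cmult (braid theta x y) (braid theta x z)).
    { intros x y z. rewrite Hsym, Hbim, (Hsym y), (Hsym z). reflexivity. }
    assert (HSS : forall n e n' e', (n <= M)%nat -> (n' <= M)%nat ->
              braid theta (ssum n e) (ssum n' e') = RtoC 1).
    { intros n e n' e' Hn Hn'.
      rewrite (braid_ssum theta Hunit Hbim n e _ (fun _ => 0%R)).
      - rewrite rsum_0 by (intros; ring). apply expi_0.
      - intros k Hk. rewrite Hsym, (braid_ssum theta Hunit Hbim n' e' _ (fun _ => 0%R)).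
        + rewrite rsum_0 by (intros; ring). reflexivity.
        + intros l Hl. rewrite expi_0. apply Hcc; lia. }
    rewrite !gen_a_eq, Hbim, !Hbim2, Hphiphi, HSS by lia.
    rewrite (Hsym (gen_phi i)).
    rewrite !(braid_ssum_phi theta Hunit Hsym Hbim M N Hphic) by lia.
    unfold pfull.
    destruct (Nat.eqb_spec i j) as [|_]; [lia|]. destruct (Nat.eqb_spec j i) as [|_]; [lia|].
    pose proof (Npos i Hi). pose proof (Npos j Hj).
    assert (Hg : 0 < Z.gcd (N i) (N j)).
    { pose proof (Z.gcd_nonneg (N i) (N j)).
      destruct (Z.eq_dec (Z.gcd (N i) (N j)) 0) as [E|]; [apply Z.gcd_eq_0 in E|]; lia. }
    destruct (Nat.ltb_spec i (S j)); destruct (Nat.ltb_spec j (S i)); try lia.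
    + rewrite Z.gcd_comm, real_key by (auto; apply Z.gcd_divide_l).
      rewrite expi_0.
      match goal with |- _ = expi ?X => destruct (expi X) end.
      unfold Cmult, RtoC; simpl; f_equal; ring.
    + rewrite real_key by (auto; apply Z.gcd_divide_r).
      rewrite (Hp j i), expi_0 by auto.
      match goal with |- _ = expi ?X => destruct (expi X) end.
      unfold Cmult, RtoC; simpl; f_equal; ring.
Qed.
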